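(* Let $G$ be a map graph with a corresponding planar bipartite graph $B$, let $\ell\in\mathbb{N}$, let $\mathcal{D}=(T,\beta_{\mathcal{D}})$ be a tree decomposition of $B$ of width less than $\ell$, and let $\mathcal{D}'=(T,\beta_{\mathcal{D}'})$ be the pair defined by $\beta_{\mathcal{D}'}(t)=(\beta_{\mathcal{D}}(t)\cap V(G))\cup\bigcup_{s\in\beta_{\mathcal{D}}(t)\cap S(G)}\big(N_B(s)\cap\gamma_{\mathcal{D}}(t)\big)$ for every node $t\in V(T)$. Then $\mathcal{D}'$ is a tree decomposition of $G$.
   Context: All graphs are finite and simple. For a bipartite graph $B$ with bipartition $V(B)=W\uplus U$, the half-square of $B$ is the graph with vertex set $W$ in which two vertices are adjacent iff they are at distance exactly $2$ in $B$. A graph $G$ is a map graph iff it is the half-square of some planar bipartite graph $B$; such a $B$ (with $W=V(G)$) is a corresponding planar bipartite graph, and the vertices of $U$ are called special vertices, denoted $S(G)$. A tree decomposition of a graph $H$ is a pair $(T,\beta)$ with $T$ a rooted tree and $\beta:V(T)\to 2^{V(H)}$ such that every vertex lies in some bag, every edge has both endpoints in some bag, and for every vertex $v$ the nodes whose bags contain $v$ induce a connected subtree; its width is the maximum bag size minus one. For a node $t$, $\gamma_{\mathcal{D}}(t)$ denotes the union of the bags $\beta_{\mathcal{D}}(t')$ over $t$ and all its descendants $t'$. *)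

(* Defs.v *)
From mathcomp Require Import all_boot fingroup perm.
Set Implicit Arguments. Unset Strict Implicit. Unset Printing Implicit Defensive.

Definition simple_graph (V : finType) (e : rel V) : Prop :=
  (forall x y, e x y = e y x) /\ (forall x, ~~ e x x).

Definition dart (V : finType) (e : rel V) := {p : V * V | e p.1 p.2}.

Definition isolated_vertices (V : finType) (e : rel V) : {set V} :=
  [set v | [forall w, ~~ e v w]].

(* A graph is planar iff it admits a rotation system (a cyclic order of the
   darts around each vertex) whose face count satisfies Euler's formula
   V - E + F = 2 on every connected component (genus 0), i.e.
   V - E + F + #isolated = 2 * #components; written without subtraction and
   with 2E = #darts. *)
Definition planar (V : finType) (e : rel V) : Prop :=
  exists (theta : dart e -> dart e) (sigma : {perm dart e}),
    [/\ (forall d, val (theta d) = ((val d).2, (val d).1)),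
        (forall d, (val (sigma d)).1 = (val d).1),
        (forall d d', (val d).1 = (val d').1 -> fconnect sigma d d') &
        2 * (#|V| + #|[pred d | froots (fun d => sigma (theta d)) d]|
                 + #|isolated_vertices e|)
          = 4 * n_comp e predT + #|{: dart e}| ].

Definition bipartite_with (V : finType) (e : rel V) (W : {set V}) : Prop :=
  forall x y, e x y -> (x \in W) != (y \in W).

(* Half-square adjacency: distance exactly 2 in B. *)
Definition halfsq (V : finType) (e : rel V) : rel V :=
  fun x y => [&& x != y, ~~ e x y & [exists s, e x s && e s y]].

(* A tree: connected graph on N with #N - 1 edges (2(#N-1) darts). *)
Definition is_tree (N : finType) (tE : rel N) : Prop :=
  [/\ simple_graph tE, (forall x y, connect tE x y) &
      #|[set p : N * N | tE p.1 p.2]| = 2 * (#|N| - 1)].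

(* In the tree rooted at r, t' is a descendant of t (or t itself) iff
   t lies on the path from r to t', i.e. t' = t or r cannot reach t'
   while avoiding t. *)
Definition descendant (N : finType) (tE : rel N) (r t t' : N) : bool :=
  (t == t') ||
  ~~ connect (fun a b => [&& tE a b, a != t & b != t]) r t'.

Definition gamma (N V : finType) (tE : rel N) (r : N) (beta : N -> {set V})
  (t : N) : {set V} :=
  \bigcup_(t' | descendant tE r t t') beta t'.

Definition tree_decomposition (N V : finType) (tE : rel N) (r : N)
  (beta : N -> {set V}) (X : {set V}) (e : rel V) : Prop :=
  [/\ is_tree tE,
      (forall t, beta t \subset X),
      (forall v, v \in X -> exists t, v \in beta t),
      (forall u v, u \in X -> v \in X -> e u v ->
          exists t, (u \in beta t) && (v \in beta t)) &
      (forall v t1 t2, v \in beta t1 -> v \in beta t2 ->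
          connect (fun a b => [&& tE a b, v \in beta a & v \in beta b]) t1 t2)].

(* width < l  <->  every bag has at most l vertices *)
Definition width_lt (N V : finType) (beta : N -> {set V}) (l : nat) : Prop :=
  forall t, #|beta t| <= l.

(* The derived bags beta_D'. W = V(G), ~: W = S(G). *)
Definition beta' (N V : finType) (tE : rel N) (r : N) (beta : N -> {set V})
  (eB : rel V) (W : {set V}) (t : N) : {set V} :=
  (beta t :&: W) :|:
  \bigcup_(s in beta t :&: ~: W) ([set x | eB s x] :&: gamma tE r beta t).

(* Main.v *)
Require Import Defs.
From mathcomp Require Import all_boot fingroup perm zify.
Set Implicit Arguments. Unset Strict Implicit. Unset Printing Implicit Defensive.

Lemma connect_ind (T : finType) (e : rel T) (x : T) (P : T -> Prop) :
  P x -> (forall y z, connect e x y -> P y -> e y z -> P z) ->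
  forall y, connect e x y -> P y.
Proof.
move=> Px step y /connectP [p].
have gen : forall w, connect e x w -> P w -> path e w p -> y = last w p -> P y.
  elim: p => [|z p IH] w cw Pw /=; first by move=> _ ->.
  case/andP=> ewz pz ly.
  apply: (IH z _ (step _ _ cw Pw ewz) pz ly).
  exact: connect_trans cw (connect1 ewz).
exact: gen (connect0 e x) Px.
Qed.

Fixpoint lay (T : finType) (e : rel T) (x0 : T) (k : nat) : {set T} :=
  if k is k'.+1 then lay e x0 k' :|: [set y | [exists x in lay e x0 k', e x y]]
  else [set x0].

Lemma darts_lb (T : finType) (e : rel T) (x0 : T) :
  symmetric e -> (forall y, connect e x0 y) ->
  2 * (#|T| - 1) <= #|[set p : T * T | e p.1 p.2]|.
Proof.
move=> esym conn.
have layE k y z : y \in lay e x0 k -> e y z -> z \in lay e x0 k.+1.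
  move=> yk eyz; rewrite /= in_setU; apply/orP; right; rewrite inE.
  by apply/existsP; exists y; rewrite yk.
have Hex y : exists k, y \in lay e x0 k.
  apply: (connect_ind (P := fun w => exists k, w \in lay e x0 k)) (conn y).
    by exists 0; rewrite /= set11.
  by move=> w z _ [k wk] ewz; exists k.+1; exact: layE wk ewz.
pose d y := ex_minn (Hex y).
have dP y : y \in lay e x0 (d y) /\ forall k, y \in lay e x0 k -> d y <= k.
  by rewrite /d; case: ex_minnP.
have par y : y != x0 -> exists x, e x y && (d x < d y).
  move=> yx0; have [yd dmin] := dP y.
  move: yd; case Edy: (d y) => [|k].
    by rewrite /= in_set1 (negbTE yx0).
  rewrite /= in_setU => /orP [yk|].
    by have := dmin _ yk; rewrite Edy ltnn.
  rewrite inE => /existsP [x /andP [xk exy]].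
  by exists x; rewrite exy /=; have := (dP x).2 _ xk; lia.
pose p y := odflt y [pick x | e x y && (d x < d y)].
have pP y : y != x0 -> e (p y) y && (d (p y) < d y).
  move=> yx0; rewrite /p; case: pickP => [x //|H].
  by have [x] := par y yx0; rewrite H.
pose A := [set~ x0].
pose f1 := fun y => (y, p y). pose f2 := fun y => (p y, y).
have i1 : injective f1 by move=> y z /(congr1 fst).
have i2 : injective f2 by move=> y z /(congr1 snd).
have cA : #|A| = #|T| - 1 by rewrite cardsC1 subn1.
have disj : f1 @: A :&: f2 @: A = set0.
  apply/setP => q; rewrite !inE; apply/negbTE/negP.
  case/andP => /imsetP [y yA ->] /imsetP [z zA [E1 E2]].
  rewrite in_setC1 in yA; rewrite in_setC1 in zA.
  have := pP y yA; have := pP z zA; rewrite -E1 -E2 => /andP [_ h1] /andP [_ h2].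
  lia.
have sub : f1 @: A :|: f2 @: A \subset [set p : T * T | e p.1 p.2].
  apply/subsetP => q; rewrite in_setU => /orP [] /imsetP [y yA ->];
  rewrite inE /=; rewrite in_setC1 in yA; have /andP [h _] := pP y yA => //.
  by rewrite esym.
have := subset_leq_card sub.
rewrite cardsU disj cards0 !card_imset // cA; lia.
Qed.

Section Tree.
Variables (N : finType) (tE : rel N) (r : N).
Hypothesis Htree : is_tree tE.

Definition avoid (c : N) := fun a b => [&& tE a b, a != c & b != c].
Definition Q t y := connect (avoid t) r y.

Lemma tE_sym : symmetric tE.
Proof. by case: Htree => [[]]. Qed.
Lemma tE_irr x : ~~ tE x x.
Proof. by case: Htree => [[]]. Qed.
Lemma tE_conn x y : connect tE x y.
Proof. by case: Htree. Qed.

Lemma avoid_sym c : symmetric (avoid c).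
Proof. by move=> x y; rewrite /avoid tE_sym; congr andb; rewrite andbC. Qed.

Lemma Q_neq t y : r != t -> Q t y -> y != t.
Proof.
move=> rt; apply: (connect_ind (P := fun w => w != t)) => //.
by move=> w z _ _ /and3P [].
Qed.

Lemma Q_root y : Q r y -> y = r.
Proof.
apply: (connect_ind (P := fun w => w = r)) => //.
by move=> w z _ -> /and3P [_]; rewrite eqxx.
Qed.

Lemma Q_step t y z : Q t y -> tE y z -> y != t -> z != t -> Q t z.
Proof.
move=> qy eyz yt zt; apply: connect_trans qy (connect1 _).
by rewrite /avoid eyz yt zt.
Qed.

Notation D := (descendant tE r).

Lemma D_root x : D r x.
Proof.
rewrite /descendant; case: eqP => //= rx; apply/negP => /Q_root.
by move=> xr; apply: rx.
Qed.

Lemma prefixL t1 t y : r != t -> Q t1 y -> Q t1 t \/ Q t y.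
Proof.
move=> rt.
apply: (connect_ind (P := fun w => Q t1 t \/ Q t w)); first by right; exact: connect0.
move=> w z cw [->|qw]; first by left.
case/and3P=> ewz wt1 zt1.
case: (eqVneq z t) => [zt|zt]; first by left; rewrite -zt; apply: Q_step cw ewz wt1 zt1.
by right; apply: Q_step qw ewz (Q_neq rt qw) zt.
Qed.

Lemma Dtrans t1 t y : D t1 t -> D t y -> D t1 y.
Proof.
rewrite /descendant.
case: (eqVneq t1 t) => [->//|t1t] /= nq1.
case: (eqVneq t y) => [<- _|ty /= nq2]; first by rewrite nq1 orbT.
apply/orP; right; apply/negP => q.
have rt : r != t.
  apply/negP => /eqP rt; move: nq1; rewrite -rt.
  by rewrite /Q connect0.
by case: (prefixL rt q) => h; [move: nq1 | move: nq2]; rewrite /Q in h; rewrite h.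
Qed.

Lemma Lboth a b : a != b -> Q a b \/ Q b a.
Proof.
move=> ab.
case: (eqVneq r a) => [<-|ra]; first by right; exact: connect0.
case: (eqVneq r b) => [<-|rb]; first by left; exact: connect0.
have : (Q a a /\ Q b a) \/ Q a b \/ Q b a.
  apply: (connect_ind (P := fun w => (Q a w /\ Q b w) \/ Q a b \/ Q b a)) (tE_conn r a).
    by left; split; exact: connect0.
  move=> w z _ [[qa qb]|h] ewz; last by right.
  have wa := Q_neq ra qa; have wb := Q_neq rb qb.
  case: (eqVneq z b) => [zb|zb].
    by right; left; rewrite -zb; apply: Q_step qa ewz wa _; rewrite zb eq_sym.
  case: (eqVneq z a) => [za|za].
    by right; right; rewrite -za; apply: Q_step qb ewz wb _; rewrite za.
  by left; split; [apply: Q_step qa ewz wa za | apply: Q_step qb ewz wb zb].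
case=> [[qa _]|//]; by have := Q_neq ra qa; rewrite eqxx.
Qed.

Lemma antisym a b : a != b -> ~~ Q a b -> ~~ Q b a -> False.
Proof. by move=> ab h1 h2; case: (Lboth ab) => h; [rewrite h in h1|rewrite h in h2]. Qed.

Lemma suffixL a b x y :
  connect (avoid a) x y -> ~~ connect (avoid b) x y -> connect (avoid a) b y.
Proof.
move=> c nc.
have : connect (avoid b) x y \/ connect (avoid a) b y.
  apply: (connect_ind (P := fun w => connect (avoid b) x w \/ connect (avoid a) b w)) c.
    by left; exact: connect0.
  move=> w z _ [h|h] ewz.
    case: (eqVneq z b) => [->|zb]; first by right; exact: connect0.
    case: (eqVneq w b) => [wb|wb].
      by right; rewrite -wb; exact: connect1.
    left; apply: connect_trans h (connect1 _).
    by case/and3P: ewz => e1 _ _; rewrite /avoid e1 wb zb.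
  by right; apply: connect_trans h (connect1 ewz).
by case=> // h; rewrite h in nc.
Qed.

Lemma T1 a b :
  tE a b ->
  connect (fun p q => tE p q && ~~ (((p == a) && (q == b)) || ((p == b) && (q == a)))) a b ->
  False.
Proof.
set e' := fun p q => _.
move=> eab cab.
have esym : symmetric e'.
  move=> x y; rewrite /e' tE_sym; congr andb; congr negb.
  by rewrite orbC; congr orb; rewrite andbC.
have cba : connect e' b a by rewrite sym_connect_sym.
have conn y : connect e' a y.
  apply: (connect_ind (P := fun w => connect e' a w)) (tE_conn a y); first exact: connect0.
  move=> w z _ cw ewz; apply: connect_trans cw _.
  case E: (e' w z); first exact: connect1.
  move: E; rewrite /e' ewz /= => /negbFE /orP [] /andP [/eqP -> /eqP ->] //.
have lb := darts_lb esym conn.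
case: Htree => _ _ cd.
have ab : a != b by apply/negP => /eqP ab; have := tE_irr a; rewrite {2}ab eab.
set A := [set p : N * N | tE p.1 p.2] in cd.
have abA : (a, b) \in A by rewrite inE.
have baA : (b, a) \in A :\ (a, b).
  rewrite !inE /= tE_sym eab andbT; apply/negP => /eqP [ba _]; by rewrite ba eqxx in ab.
have sub : [set p : N * N | e' p.1 p.2] \subset A :\ (a, b) :\ (b, a).
  apply/subsetP => [[x y]]; rewrite !inE /= /e' => /andP [-> h].
  rewrite andbT; apply/andP; split; apply/negP => /eqP [ex ey]; subst x y;
  by rewrite !eqxx ?orbT in h.
have := subset_leq_card sub.
have := cardsD1 (a, b) A; have := cardsD1 (b, a) (A :\ (a, b)).
rewrite abA baA; lia.
Qed.

Lemma noCycle a b x :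
  tE a b -> connect (avoid b) a x -> connect (avoid a) b x -> False.
Proof.
move=> eab c1 c2.
set e' := fun p q => tE p q && ~~ (((p == a) && (q == b)) || ((p == b) && (q == a))).
have esym : symmetric e'.
  move=> u v; rewrite /e' tE_sym; congr andb; congr negb.
  by rewrite orbC; congr orb; rewrite andbC.
have sub c : c = a \/ c = b -> subrel (avoid c) (connect e').
  move=> hc u v /and3P [euv uc vc]; apply: connect1; rewrite /e' euv /=.
  apply/negP => /orP [] /andP [/eqP eu /eqP ev]; subst u v;
  case: hc => hc; subst c; first [by rewrite eqxx in uc | by rewrite eqxx in vc].
have d1 := connect_sub (sub b (or_intror erefl)) c1.
have d2 := connect_sub (sub a (or_introl erefl)) c2.
apply: (T1 eab); apply: connect_trans d1 _; by rewrite sym_connect_sym.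
Qed.


Lemma top (Pr : pred N) t1 : Pr t1 ->
  (forall x y, Pr x -> Pr y -> connect (fun a b => [&& tE a b, Pr a & Pr b]) x y) ->
  exists t, Pr t /\ forall x, Pr x -> D t x.
Proof.
move=> Pt1 Pconn.
pose desc t := [set y | D t y].
case: (arg_maxnP (fun t => #|desc t|) Pt1) => t Pt tmax.
exists t; split => // x Px; apply/negPn/negP => nD.
move: (nD); rewrite /descendant negb_or => /andP [tx /negbNE qx].
have rt : r != t.
  apply/negP => /eqP rt; move: nD; rewrite -rt; by rewrite D_root.
have : (t != t /\ Q t t) \/ exists y, [/\ Pr y, y != t, Q t y & tE y t].
  apply: (connect_ind (P := fun w => (w != t /\ Q t w) \/ exists y, [/\ Pr y, y != t, Q t y & tE y t])) (Pconn x t Px Pt).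
    by left; rewrite eq_sym tx.
  move=> w z _ [[wt qw]|h] /and3P [ewz Pw Pz]; last by right.
  case: (eqVneq z t) => [zt|zt].
    by right; exists w; split => //; rewrite -zt.
  by left; split => //; apply: Q_step qw ewz wt zt.
case=> [[]|[y [Py yt qy eyt]]]; first by rewrite eqxx.
have Dyt : D y t.
  rewrite /descendant; apply/orP; right; apply/negP => qyt.
  apply: (@noCycle t y r); first by rewrite tE_sym.
    by rewrite sym_connect_sym //; exact: avoid_sym.
  by rewrite sym_connect_sym //; exact: avoid_sym.
have pr : desc t \proper desc y.
  apply/properP; split.
    by apply/subsetP => z; rewrite !inE => h; apply: Dtrans Dyt h.
  exists y; first by rewrite inE /descendant eqxx.
  by rewrite inE /descendant negb_or eq_sym yt /= negbK.
have := proper_card pr; have := tmax y Py; lia.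
Qed.

Lemma exitL (Pr : pred N) y w :
  connect (fun a b => [&& tE a b, Pr a & Pr b]) y w -> y != w ->
  exists z, [/\ tE y z, Pr z & connect (avoid y) z w].
Proof.
move=> c yw.
have : w = y \/ exists z, [/\ tE y z, Pr z & connect (avoid y) z w].
  apply: (connect_ind (P := fun u => u = y \/ exists z, [/\ tE y z, Pr z & connect (avoid y) z u])) c.
    by left.
  move=> u u' _ h /and3P [e pu pu'].
  case: (eqVneq u' y) => [->|u'y]; first by left.
  case: (eqVneq u y) => [uy|uy].
    by right; exists u'; rewrite -uy; split => //; exact: connect0.
  case: h => [uy'|[z [ez pz cz]]]; first by rewrite uy' eqxx in uy.
  right; exists z; split => //; apply: connect_trans cz (connect1 _).
  by rewrite /avoid e uy u'y.
by case => [wy|//]; rewrite wy eqxx in yw.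
Qed.

End Tree.

Theorem lemma9 (VB : finType) (eB : rel VB) (W : {set VB})
  (N : finType) (tE : rel N) (r : N) (beta : N -> {set VB}) (l : nat) :
  simple_graph eB -> planar eB -> bipartite_with eB W ->
  tree_decomposition tE r beta [set: VB] eB ->
  width_lt beta l ->
  tree_decomposition tE r (beta' tE r beta eB W) W (halfsq eB).
Proof.
move=> [eBsym eBirr] _ Hbip [Htree Hsub Hcov Hedge Hconn] _.
set B' := beta' tE r beta eB W.
have gammaP t v : reflect (exists2 t', descendant tE r t t' & v \in beta t')
    (v \in gamma tE r beta t) by exact: bigcupP.
have inB' t v : v \in B' t <-> (v \in beta t /\ v \in W) \/
    exists s, [/\ s \in beta t, s \notin W, eB s v & v \in gamma tE r beta t].
  rewrite /B' /beta' in_setU in_setI; split.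
    case/orP => [/andP [? ?]|]; first by left.
    case/bigcupP => s; rewrite in_setI in_setC => /andP [sb sW].
    by rewrite in_setI inE => /andP [esv vg]; right; exists s.
  case => [[h1 h2]|[s [h1 h2 h3 h4]]]; apply/orP; first by left; rewrite h1 h2.
  right; apply/bigcupP; exists s; first by rewrite in_setI in_setC h1 h2.
  by rewrite in_setI inE h3 h4.
have nbW s x : s \notin W -> eB s x -> x \in W.
  by move=> sW esx; move: (Hbip s x esx); rewrite (negbTE sW); case: (x \in W).
have subW t : B' t \subset W.
  by apply/subsetP => v /inB' [[_ ->]|[s [_ sW esv _]]] //; exact: nbW esv.
split => //.
- move=> v vW; have [t vt] := Hcov v (in_setT v); exists t; apply/inB'; by left.
- move=> u v uW vW /and3P [_ _ /existsP [s /andP [eus esv]]].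
  have sW : s \notin W by move: (Hbip u s eus); rewrite uW; case: (s \in W).
  have [t1 st1] := Hcov s (in_setT s).
  have [t [st tD]] := top r Htree (Pr := fun t => s \in beta t) st1
     (fun x y hx hy => Hconn s x y hx hy).
  have [tu /andP [utu stu]] := Hedge u s (in_setT _) (in_setT _) eus.
  have [tv /andP [stv vtv]] := Hedge s v (in_setT _) (in_setT _) esv.
  exists t; apply/andP; split; apply/inB'; right; exists s; split => //.
  + by rewrite eBsym.
  + by apply/gammaP; exists tu => //; exact: tD.
  + by apply/gammaP; exists tv => //; exact: tD.
- move=> v t1 t2 v1 v2.
  have vW : v \in W := subsetP (subW t1) v v1.
  set R' := fun a b => [&& tE a b, v \in B' a & v \in B' b].
  have R'sym : symmetric R'.
    by move=> a b; rewrite /R' (tE_sym Htree); congr andb; rewrite andbC.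
  have inB'b t : v \in beta t -> v \in B' t by move=> h; apply/inB'; left.
  have C t : v \in B' t -> exists t0, v \in beta t0 /\ connect R' t t0.
    move=> /inB' [[vt _]|[s [st sW esv /gammaP [t'' Dt vt'']]]].
      by exists t; split => //; exact: connect0.
    have [t0 /andP [st0 vt0]] := Hedge s v (in_setT _) (in_setT _) esv.
    case Dt0: (descendant tE r t t0).
      exists t0; split => //.
      have inX y : s \in beta y -> descendant tE r y t0 -> v \in B' y.
        move=> sy Dy; apply/inB'; right; exists s; split => //.
        by apply/gammaP; exists t0.
      suff X : forall n y, #|[set z | descendant tE r y z]| <= n ->
          s \in beta y -> descendant tE r y t0 -> connect R' y t0.
        exact: X _ t (leqnn _) st Dt0.
      elim => [|n IH] y.
        rewrite leqn0 => /eqP/cards0_eq h.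
        have : y \in [set z | descendant tE r y z] by rewrite inE /descendant eqxx.
        by rewrite h inE.
      move=> cy sy Dy.
      case: (eqVneq y t0) => [->|yt0]; first exact: connect0.
      have nqy : ~~ Q tE r y t0 by move: Dy; rewrite /descendant (negbTE yt0).
      have [z [eyz sz cz]] := exitL (Hconn s y t0 sy st0) yt0.
      have zy : z != y.
        apply/negP => /eqP zy; rewrite zy in eyz.
        by have := tE_irr Htree y; rewrite eyz.
      have Dz : descendant tE r z t0.
        rewrite /descendant; apply/orP; right; apply/negP => qz.
        have c1 : connect (avoid tE z) y t0 := suffixL qz nqy.
        exact: (noCycle Htree eyz c1 cz).
      have Dyz : descendant tE r y z.
        rewrite /descendant; apply/orP; right; apply/negP => qyz.
        by move/negP: nqy; apply; exact: connect_trans qyz cz.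
      have qzy : Q tE r z y.
        apply/negPn/negP => h.
        apply: (antisym Htree (a := y) (b := z)) h; first by rewrite eq_sym.
        by move: Dyz; rewrite /descendant eq_sym (negbTE zy).
      have lt : #|[set z0 | descendant tE r z z0]| < #|[set z0 | descendant tE r y z0]|.
        apply: proper_card; apply/properP; split.
          by apply/subsetP => w; rewrite !inE => h; apply: Dtrans Dyz h.
        exists y; first by rewrite inE /descendant eqxx.
        by rewrite inE /descendant negb_or zy /= negbK.
      apply: connect_trans (connect1 _) (IH z _ sz Dz).
        by rewrite /R' eyz !inX.
      by rewrite -ltnS; exact: leq_trans lt cy.
    have vt : v \in beta t.
      move: Dt0; rewrite /descendant => /negbT; rewrite negb_or => /andP [tt0 /negbNE qt0].
      have rt : r != t.
        apply/negP => /eqP rt; move: qt0; rewrite -rt => /Q_root rt0.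
        by move: tt0; rewrite -rt rt0 eqxx.
      have : Q tE r t t'' \/ v \in beta t.
        apply: (connect_ind (P := fun w => Q tE r t w \/ v \in beta t)) (Hconn v t0 t'' vt0 vt'').
          by left.
        move=> w z _ [qw|h] /and3P [ewz _ vz]; last by right.
        case: (eqVneq z t) => [zt|zt]; first by right; rewrite -zt.
        by left; apply: Q_step qw ewz (Q_neq rt qw) zt.
      case => // qt''.
      case: (eqVneq t t'') => [->//|tnt].
      by move: Dt; rewrite /descendant (negbTE tnt) /=; rewrite /Q in qt''; rewrite qt''.
    by exists t; split => //; exact: connect0.
  have [t01 [b1 c1]] := C t1 v1; have [t02 [b2 c2]] := C t2 v2.
  have c12 : connect R' t01 t02.
    apply: connect_sub (Hconn v t01 t02 b1 b2) => a b /and3P [e ha hb].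
    by apply: connect1; rewrite /R' e !inB'b.
  apply: connect_trans c1 (connect_trans c12 _).
  by rewrite (sym_connect_sym R'sym).
Qed.
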